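(* Let $\mathcal{F}=\{f_1,\dots,f_n\}$ be a basis for $\mathbb{R}^n$ and $\mathcal{F}^*=\{f_1^*,\dots,f_n^*\}$ its dual basis. Then: (i) If $M$ is a $k$-dimensional PR-subspace with respect to $\mathcal{F}$, then $|\mathrm{supp}_{\mathcal{F}^*}(x)|\ge k$ for every nonzero $x\in M$; consequently $M$ is maximal if there exists $x\in M$ with $|\mathrm{supp}_{\mathcal{F}^*}(x)|=k$. (ii) For every positive integer $k\le[(n+1)/2]$ and every vector $x\in\mathbb{R}^n$ with $|\mathrm{supp}_{\mathcal{F}^*}(x)|=k$, there exists a $k$-dimensional maximal PR-subspace $M$ with respect to $\mathcal{F}$ such that $x\in M$. (iii) If $k<[(n+1)/2]$ and $M$ is a $k$-dimensional PR-subspace with respect to $\mathcal{F}$, then $M$ is maximal if and only if there exists $x\in M$ with $|\mathrm{supp}_{\mathcal{F}^*}(x)|=k$.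
   Context: The dual basis $\{f_i^*\}$ is the unique basis with $\langle f_i^*,f_j\rangle=\delta_{ij}$. For $x=\sum_{i=1}^n c_if_i^*$, $\mathrm{supp}_{\mathcal{F}^*}(x)=\{i:c_i\neq0\}$. $[a]$ is the integer part of $a$. A subspace $M$ is a PR-subspace with respect to $\mathcal{F}$ if $\{P_Mf_i\}_{i=1}^n$ (with $P_M$ the orthogonal projection onto $M$) spans $M$ and whenever $x,y\in M$ satisfy $|\langle x,P_Mf_i\rangle|=|\langle y,P_Mf_i\rangle|$ for all $i$, then $x=\pm y$; it is maximal if it is not a proper subspace of another PR-subspace with respect to $\mathcal{F}$. *)

(* Defs.v *)
(* Subspaces are row spaces of square matrices (mxalgebra). *)
From HB Require Import structures.
From mathcomp Require Import all_boot all_order all_algebra.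
From mathcomp Require Import reals.
Set Implicit Arguments. Unset Strict Implicit. Unset Printing Implicit Defensive.
Import Order.TTheory GRing.Theory Num.Theory.
Local Open Scope ring_scope.

Section PR.
Variables (R : realType) (n : nat).

Definition inner (x y : 'rV[R]_n) : R := \sum_(i < n) x 0 i * y 0 i.

(* matrix of the orthogonal projection onto the row space of M
   (acting on row vectors by right multiplication):
   P = B^T (B B^T)^{-1} B with B = row_base M (a row-free basis of M) *)
Definition oproj_mx (M : 'M[R]_n) : 'M[R]_n :=
  let B := row_base M in (B^T *m invmx (B *m B^T)) *m B.

Definition oproj (M : 'M[R]_n) (v : 'rV[R]_n) : 'rV[R]_n := v *m oproj_mx M.

Definition is_dual_basis (f g : 'M[R]_n) : Prop :=
  forall i j : 'I_n, inner (row i g) (row j f) = (i == j)%:R.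

(* coefficients c of x in the basis g : x = sum_i c_i g_i *)
Definition coords (g : 'M[R]_n) (x : 'rV[R]_n) : 'rV[R]_n := x *m invmx g.

Definition supp (g : 'M[R]_n) (x : 'rV[R]_n) : {set 'I_n} :=
  [set i | coords g x 0 i != 0].

Definition PR_subspace (f M : 'M[R]_n) : Prop :=
  (\sum_(i < n) <<oproj M (row i f)>> == M)%MS /\
  forall x y : 'rV[R]_n, (x <= M)%MS -> (y <= M)%MS ->
    (forall i : 'I_n, `|inner x (oproj M (row i f))| = `|inner y (oproj M (row i f))|) ->
    x = y \/ x = - y.

Definition maximal_PR (f M : 'M[R]_n) : Prop :=
  PR_subspace f M /\ forall M' : 'M[R]_n, PR_subspace f M' -> ~ (M < M')%MS.

End PR.

(* Main.v *)
Require Import Defs.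
From HB Require Import structures.
From mathcomp Require Import all_boot all_order all_algebra.
From mathcomp Require Import reals.
From mathcomp Require Import boolp.
From mathcomp Require Import ring lra zify.
Import Order.TTheory GRing.Theory Num.Theory.
Local Open Scope ring_scope.
Set Implicit Arguments. Unset Strict Implicit. Unset Printing Implicit Defensive.

Section Aux.
Variables (R : realType) (n : nat).
Implicit Types (M : 'M[R]_n) (x y v : 'rV[R]_n).

Lemma nz_row_sub m p (A : 'M[R]_(m, p)) : A != 0 -> exists2 y : 'rV[R]_p, (y <= A)%MS & y != 0.
Proof.
move=> nA; have [i Hi] : exists i, row i A != 0.
  apply/existsP; apply: contraR nA; rewrite negb_exists => /forallP H.
  by apply/eqP/row_matrixP => i; rewrite row0; apply/eqP; move: (H i); rewrite negbK.
by exists (row i A); rewrite ?row_sub.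
Qed.

Lemma BBt_unit m (B : 'M[R]_(m, n)) : row_free B -> B *m B^T \in unitmx.
Proof.
move=> fB; rewrite -row_free_unit /row_free; apply: contraT => H.
have Hk : kermx (B *m B^T) != 0.
  rewrite -mxrank_eq0 mxrank_ker; move: H (rank_leq_col (B *m B^T)); lia.
have [w] := nz_row_sub Hk; rewrite sub_kermx => /eqP Hw wn0.
have : w *m B == 0.
  have : (w *m B *m (w *m B)^T) 0 0 = 0.
    by rewrite trmx_mul mulmxA -(mulmxA w) Hw mul0mx mxE.
  rewrite mxE => /eqP; rewrite psumr_eq0; last by move=> i _; rewrite [X in _ * X]mxE -expr2 sqr_ge0.
  move=> /allP H0; apply/eqP/matrixP => i j; rewrite (ord1 i) [RHS]mxE.
  have := H0 j (mem_index_enum j); rewrite /= [X in _ * X]mxE mulf_eq0 orbb => /eqP ->; by [].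
by rewrite mulmx_free_eq0 // (negbTE wn0).
Qed.

Lemma inner_mx x y : inner x y = (x *m y^T) 0 0.
Proof. by rewrite /inner mxE; apply: eq_bigr => i _; rewrite mxE. Qed.

Lemma oproj_sub M v : (oproj M v <= M)%MS.
Proof.
rewrite /oproj /oproj_mx mulmxA; apply: submx_trans (submxMl _ _) _.
by rewrite eq_row_base.
Qed.

Lemma proj_gen r (B : 'M[R]_(r, n)) (u : 'rV_r) : row_free B ->
  (u *m B) *m ((B^T *m invmx (B *m B^T)) *m B) = u *m B.
Proof.
move=> fB; have uB := BBt_unit fB.
by rewrite !mulmxA -(mulmxA u B B^T) mulmxK.
Qed.

Lemma proj_gen2 r (B : 'M[R]_(r, n)) v : row_free B ->
  v *m ((B^T *m invmx (B *m B^T)) *m B) *m B^T = v *m B^T.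
Proof.
move=> fB; have uB := BBt_unit fB.
by rewrite !mulmxA -(mulmxA _ _ B^T) -(mulmxA _ (invmx _)) mulVmx ?mulmx1.
Qed.

Lemma gen_tr r (B : 'M[R]_(r, n)) (u : 'rV_r) (w1 w2 : 'rV[R]_n) :
  w1 *m B^T = w2 *m B^T -> ((u *m B) *m w1^T) 0 0 = ((u *m B) *m w2^T) 0 0.
Proof.
move=> E; rewrite -!mulmxA.
have -> : B *m w1^T = (w1 *m B^T)^T by rewrite trmx_mul trmxK.
by rewrite E trmx_mul trmxK.
Qed.

Lemma oproj_id M y : (y <= M)%MS -> y *m oproj_mx M = y.
Proof.
rewrite -(eq_row_base M) => /submxP [u ->].
by rewrite /oproj_mx proj_gen // row_base_free.
Qed.

Lemma inner_oproj M y v : (y <= M)%MS -> inner y (oproj M v) = inner y v.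
Proof.
rewrite !inner_mx -(eq_row_base M) => /submxP [u ->].
have E : oproj M v *m (row_base M)^T = v *m (row_base M)^T.
  by rewrite /oproj /oproj_mx proj_gen2 // row_base_free.
by apply: gen_tr.
Qed.


Lemma le_sum_abs (ts : seq R) s : s \in ts -> s <= \sum_(u <- ts) `|u|.
Proof.
elim: ts => [|x ts IH] //; rewrite big_cons in_cons => /orP [/eqP -> | h].
  have : 0 <= \sum_(u <- ts) `|u| by apply: sumr_ge0.
  have := real_ler_norm (num_real x); lra.
have := IH h; have := normr_ge0 x; lra.
Qed.

Lemma fresh_real (ts : seq R) : exists t, t \notin ts.
Proof.
exists (1 + \sum_(u <- ts) `|u|); apply/negP => /le_sum_abs; lra.
Qed.

Lemma finite_bad (Us : seq 'M[R]_n) v w :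
  (forall U, U \in Us -> ~~ ((v <= U)%MS && (w <= U)%MS)) ->
  exists ts : seq R, forall t, t \notin ts -> forall U, U \in Us -> ~~ ((v + t *: w)%R <= U)%MS.
Proof.
elim: Us => [|U Us IH] H.
  by exists [::] => t _ U; rewrite in_nil.
have [ts Hts] : exists ts : seq R, forall t, t \notin ts -> forall U, U \in Us -> ~~ ((v + t *: w)%R <= U)%MS.
  by apply: IH => U' HU'; apply: H; rewrite in_cons HU' orbT.
have HU := H U (mem_head _ _).
case: (pselect (exists t0, ((v + t0 *: w)%R <= U)%MS)) => [[t0 Ht0]|Hn].
  exists (t0 :: ts) => t; rewrite in_cons negb_or => /andP [tt0 tts] U'.
  rewrite in_cons => /orP [/eqP -> | HU']; last exact: Hts.
  apply/negP => Ht; move/negP: HU; apply; apply/andP.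
  have Hd : ((t - t0) *: w <= U)%MS.
    have -> : (t - t0) *: w = (v + t *: w) - (v + t0 *: w) by apply/matrixP => a b; rewrite !mxE; ring.
    by apply: addmx_sub => //; rewrite eqmx_opp.
  have Hw : (w <= U)%MS.
    have tn0 : t - t0 != 0 by rewrite subr_eq0.
    have -> : w = (t - t0)^-1 *: ((t - t0) *: w) by rewrite scalerA mulVf ?scale1r.
    exact: scalemx_sub.
  split => //.
  have -> : v = (v + t0 *: w) - t0 *: w by apply/matrixP => a b; rewrite !mxE; ring.
  by apply: addmx_sub => //; rewrite eqmx_opp; apply: scalemx_sub.
exists ts => t tts U'; rewrite in_cons => /orP [/eqP -> | HU']; last exact: Hts.
by apply/negP => Ht; apply: Hn; exists t.
Qed.

Lemma AVOID (Us : seq 'M[R]_n) : (forall U, U \in Us -> (\rank U < n)%N) ->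
  exists v : 'rV[R]_n, forall U, U \in Us -> ~~ (v <= U)%MS.
Proof.
elim: Us => [|U Us IH] H.
  by exists 0 => U; rewrite in_nil.
have [v Hv] : exists v : 'rV[R]_n, forall U, U \in Us -> ~~ (v <= U)%MS.
  by apply: IH => U' HU'; apply: H; rewrite in_cons HU' orbT.
have : ~~ (1%:M <= U)%MS.
  rewrite sub1mx /row_full; have := H U (mem_head _ _); lia.
case/row_subPn => i Hi.
have Hb : forall U', U' \in U :: Us -> ~~ ((v <= U')%MS && (row i 1%:M <= U')%MS).
  move=> U'; rewrite in_cons => /orP [/eqP -> | HU'].
    by rewrite (negbTE Hi) andbF.
  by rewrite (negbTE (Hv _ HU')).
have [ts Hts] := finite_bad Hb.
have [t Ht] := fresh_real ts.
by exists (v + t *: row i 1%:M); apply: Hts.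
Qed.
End Aux.

Section Main.
Variables (R : realType) (n : nat) (f fs : 'M[R]_n).
Hypotheses (hf : row_free f) (hfs : is_dual_basis f fs).
Implicit Types (M : 'M[R]_n) (x y v a b : 'rV[R]_n).

Definition L y := y *m f^T.

Lemma inner_f y i : inner y (row i f) = L y 0 i.
Proof. by rewrite inner_mx /L mxE [RHS]mxE; apply: eq_bigr => l _; rewrite !mxE. Qed.

Lemma fs_ft : fs *m f^T = 1%:M.
Proof.
apply/matrixP => i j; rewrite [RHS]mxE -hfs inner_mx !mxE; apply: eq_bigr => l _; rewrite !mxE.
by [].
Qed.

Lemma coordsE y : coords fs y = L y.
Proof.
have [u1 _] := mulmx1_unit fs_ft.
by rewrite /coords /L -[f^T](mulKmx u1) fs_ft mulmx1.
Qed.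

Lemma suppE y : supp fs y = [set i | L y 0 i != 0].
Proof. by apply/setP => i; rewrite !inE coordsE. Qed.

Lemma LD a b : L (a + b) = L a + L b.
Proof. by rewrite /L mulmxDl. Qed.
Lemma LN a : L (- a) = - L a.
Proof. by rewrite /L mulNmx. Qed.
Lemma LZ t a : L (t *: a) = t *: L a.
Proof. by rewrite /L scalemxAl. Qed.

Lemma span_ok M : (\sum_(i < n) <<oproj M (row i f)>> == M)%MS.
Proof.
apply/andP; split.
  by apply/sumsmx_subP => i _; rewrite genmxE oproj_sub.
apply/rV_subP => y Hy.
have : (y <= f)%MS by rewrite submx_full // row_full_unit -row_free_unit.
case/submxP => u Eu.
rewrite -(oproj_id Hy) Eu (mulmx_sum_row u f) mulmx_suml.
apply: summx_sub => i _; rewrite -scalemxAl; apply: scalemx_sub.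
by apply: (sumsmx_sup i) => //; rewrite genmxE.
Qed.

Definition PRc M := forall a b, (a <= M)%MS -> (b <= M)%MS ->
  (forall i, L a 0 i = 0 \/ L b 0 i = 0) -> a = 0 \/ b = 0.

Lemma PR_PRc M : PR_subspace f M -> PRc M.
Proof.
case=> _ H a b Ha Hb Hab.
have Hx : ((a + b)%R <= M)%MS by apply: addmx_sub.
have Hy : ((a - b)%R <= M)%MS by apply: addmx_sub => //; rewrite eqmx_opp.
have := H _ _ Hx Hy.
have Hn : forall i, `|inner (a + b) (oproj M (row i f))| = `|inner (a - b) (oproj M (row i f))|.
  move=> i; rewrite !inner_oproj // !inner_f !LD LN.
  have := Hab i; set La := L a; set Lb := L b; rewrite !mxE.
  by case=> ->; rewrite ?add0r ?sub0r ?addr0 ?subr0 ?normrN.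
case/(_ Hn) => E.
  right; apply/matrixP => i j; move/matrixP/(_ i j): E; rewrite !mxE; lra.
left; apply/matrixP => i j; move/matrixP/(_ i j): E; rewrite !mxE; lra.
Qed.

Lemma norm_eq_cases (u w : R) : `|u| = `|w| -> u = w \/ u = - w.
Proof.
case: (lerP 0 u) => hu; case: (lerP 0 w) => hw.
- by rewrite (ger0_norm hu) (ger0_norm hw) => E; lra.
- by rewrite (ger0_norm hu) (ltr0_norm hw) => E; lra.
- by rewrite (ltr0_norm hu) (ger0_norm hw) => E; lra.
- by rewrite (ltr0_norm hu) (ltr0_norm hw) => E; lra.
Qed.

Lemma PRc_PR M : PRc M -> PR_subspace f M.
Proof.
move=> H; split; first exact: span_ok.
move=> x y Hx Hy Hn.
have Ha : ((x - y)%R <= M)%MS by apply: addmx_sub => //; rewrite eqmx_opp.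
have Hb : ((x + y)%R <= M)%MS by apply: addmx_sub.
case: (H _ _ Ha Hb).
- move=> i; move: (Hn i); rewrite !inner_oproj // !inner_f !LD LN.
  rewrite [((_ + _)%R : 'rV_n) 0 i]mxE [((_ + _)%R : 'rV_n) 0 i]mxE [((- _)%R : 'rV_n) 0 i]mxE.
  by case/norm_eq_cases => ->; [left|right]; lra.
- move=> E; left; apply/matrixP => i j; move/matrixP/(_ i j): E; rewrite !mxE; lra.
- move=> E; right; apply/matrixP => i j; move/matrixP/(_ i j): E; rewrite !mxE; lra.
Qed.

Definition Sel (S : {set 'I_n}) : 'M[R]_(n, #|S|) := \matrix_(j, l) (j == enum_val l)%:R.
Definition V (S : {set 'I_n}) : 'M[R]_n := kermx (f^T *m Sel S).

Lemma Sel_mul (w : 'rV[R]_n) S l : (w *m Sel S) 0 l = w 0 (enum_val l).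
Proof.
rewrite mxE (bigD1 (enum_val l)) //= mxE eqxx mulr1 big1 ?addr0 // => j /negbTE.
by rewrite mxE => ->; rewrite mulr0.
Qed.

Lemma sub_V y S : (y <= V S)%MS <-> (forall i, i \in S -> L y 0 i = 0).
Proof.
rewrite /V sub_kermx mulmxA -/(L y); split.
  move=> /eqP H i Hi; have := Sel_mul (L y) (enum_rank_in Hi i).
  by rewrite H enum_rankK_in // mxE => <-.
move=> H; apply/eqP/matrixP => a l; rewrite (ord1 a) Sel_mul [RHS]mxE.
by apply: H; apply: enum_valP.
Qed.

Lemma ft_unit : f^T \in unitmx.
Proof. by rewrite unitmx_tr -row_free_unit. Qed.

Lemma rank_V S : \rank (V S) = (n - #|S|)%N.
Proof.
rewrite /V mxrank_ker; congr (_ - _)%N.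
apply/eqP; rewrite eqn_leq rank_leq_col /=.
have E : (Sel S)^T *m Sel S = 1%:M.
  apply/matrixP => l l'; rewrite !mxE (bigD1 (enum_val l)) //= !mxE eqxx mul1r.
  rewrite big1 ?addr0; last by move=> j /negbTE Hj; rewrite !mxE Hj mul0r.
  by rewrite (inj_eq enum_val_inj).
have h1 : (#|S| <= \rank (Sel S))%N by rewrite -{1}(mxrank1 R #|S|) -E mxrankM_maxr.
apply: leq_trans h1 _.
by rewrite -{1}(mulKmx ft_unit (Sel S)) mxrankM_maxr.
Qed.

Lemma KER M (S : {set 'I_n}) : (#|S| < \rank M)%N ->
  exists2 y, (y <= M)%MS & y != 0 /\ (forall i, i \in S -> L y 0 i = 0).
Proof.
move=> H.
have h := mxrank_sum_cap M (V S); rewrite rank_V in h.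
have h2 := rank_leq_col (M + V S)%MS.
have h3 := rank_leq_col M.
have : (M :&: V S)%MS != 0 by rewrite -mxrank_eq0; lia.
case/nz_row_sub => y; rewrite sub_capmx => /andP [h4 h5] y0.
by exists y => //; split => //; apply/sub_V.
Qed.

Lemma supp0 : supp fs 0 = set0.
Proof. by apply/setP => i; rewrite suppE !inE /L mul0mx mxE eqxx. Qed.

Lemma part1 M x : PR_subspace f M -> (x <= M)%MS -> x != 0 -> (\rank M <= #|supp fs x|)%N.
Proof.
move=> HP Hx x0; rewrite leqNgt; apply/negP => H.
have [y Hy [y0 Hy2]] := KER H.
case: (PR_PRc HP Hx Hy).
- move=> i; case: (boolP (i \in supp fs x)) => Hi; first by right; apply: Hy2.
  by left; move: Hi; rewrite suppE inE negbK => /eqP.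
- by move=> E; rewrite E eqxx in x0.
- by move=> E; rewrite E eqxx in y0.
Qed.

Lemma part2 M x : PR_subspace f M -> (0 < \rank M)%N -> (x <= M)%MS ->
  #|supp fs x| = \rank M -> maximal_PR f M.
Proof.
move=> HP Hr Hx Hs; split => // M' HM' Hlt.
have xM' : (x <= M')%MS by apply: submx_trans Hx (ltmxW Hlt).
have x0 : x != 0.
  by apply/eqP => E; move: Hs; rewrite E supp0 cards0 => E2; rewrite -E2 in Hr.
have := part1 HM' xM' x0; move: Hlt; rewrite ltmxErank => /andP [_ h]; lia.
Qed.

Lemma DEC M v y (Z : {set 'I_n}) : (y <= M + <<v>>)%MS ->
  (forall i, i \in Z -> L y 0 i = 0) -> (y <= M)%MS \/ (v <= M + V Z)%MS.
Proof.
case/sub_addsmxP => u Eu HZ.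
have : (u.2 *m <<v>> <= v)%MS by apply: submx_trans (submxMl _ _) _; rewrite genmxE.
case/sub_rVP => t Et.
have [t0|tn0] := eqVneq t 0.
  by left; rewrite Eu Et t0 scale0r addr0 submxMl.
right.
have -> : v = t^-1 *: (y - u.1 *m M).
  by rewrite Eu Et addrC addKr scalerA mulVf ?scale1r.
apply: scalemx_sub; apply: addmx_sub.
  by apply: submx_trans (addsmxSr _ _); apply/sub_V.
by rewrite eqmx_opp; apply: submx_trans (addsmxSl _ _); apply: submxMl.
Qed.

Lemma card_le_n (S : {set 'I_n}) : (#|S| <= n)%N.
Proof. by have := max_card S; rewrite card_ord. Qed.

Lemma rank_adds_V M (Z : {set 'I_n}) : (\rank (M + V Z)%MS <= \rank M + (n - #|Z|))%N.
Proof. by rewrite -rank_V; case: (mxrank_adds_leqif M (V Z)). Qed.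

Definition Zs y : {set 'I_n} := [set i | L y 0 i == 0].

Lemma supp_card_compl y : (#|Zs y| + #|supp fs y| = n)%N.
Proof.
have -> : Zs y = ~: supp fs y by apply/setP => i; rewrite suppE !inE negbK.
by rewrite addnC cardsC card_ord.
Qed.

Lemma extend M k : PR_subspace f M -> \rank M = k -> (k.*2 < n)%N ->
  (forall y, (y <= M)%MS -> y != 0 -> (k < #|supp fs y|)%N) ->
  exists M', PR_subspace f M' /\ (M < M')%MS.
Proof.
move=> HP Hr Hn Hs.
pose Us := [seq (M + V Y)%MS | Y <- enum [set Y : {set 'I_n} | (k < #|Y|)%N]].
have [v Hv] : exists v : 'rV[R]_n, forall U, U \in Us -> ~~ (v <= U)%MS.
  apply: AVOID => U /mapP [Y]; rewrite mem_enum inE => HS ->.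
  have := rank_adds_V M Y; have := card_le_n Y; lia.
have Hv' : forall Y : {set 'I_n}, (k < #|Y|)%N -> ~~ (v <= M + V Y)%MS.
  by move=> Y HS; apply: Hv; apply: map_f; rewrite mem_enum inE.
have vM : ~~ (v <= M)%MS.
  apply: contra (Hv' setT _); last by rewrite cardsT card_ord; lia.
  by move=> h; apply: submx_trans h (addsmxSl _ _).
exists (M + <<v>>)%MS; split; last first.
  rewrite ltmxE addsmxSl /=; apply: contra vM => h.
  by apply: submx_trans h; apply: submx_trans (addsmxSr _ _); rewrite genmxE.
apply: PRc_PR => a b Ha Hb Hab.
have PM := PR_PRc HP.
have Q : forall a, (a <= M + <<v>>)%MS -> (a <= M)%MS \/ (#|Zs a| <= k)%N.
  move=> a' Ha'; case: (DEC Ha' (Z := Zs a')).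
  - by move=> i; rewrite inE => /eqP.
  - by left.
  - move=> h; right; rewrite leqNgt; apply/negP => h2.
    by move/negP: (Hv' _ h2).
have QM : forall a, (a <= M)%MS -> a != 0 -> (#|Zs a| < n - k)%N.
  move=> a' h1 h2; have := Hs _ h1 h2; have := supp_card_compl a'; lia.
have [->|a0] := eqVneq a 0; first by left.
have [->|b0] := eqVneq b 0; first by right.
have HU : Zs a :|: Zs b = setT.
  apply/setP => i; rewrite !inE; by case: (Hab i) => ->; rewrite eqxx ?orbT.
have Hc := cardsU (Zs a) (Zs b).
rewrite HU cardsT card_ord in Hc.
case: (Q _ Ha) => [aM|ca]; case: (Q _ Hb) => [bM|cb].
- exact: PM.
- have := QM _ aM a0; lia.
- have := QM _ bM b0; lia.
- lia.
Qed.

Lemma superset (A : {set 'I_n}) m : (#|A| <= m)%N -> (m <= n)%N ->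
  exists B : {set 'I_n}, A \subset B /\ #|B| = m.
Proof.
elim: m => [|m IH] h1 h2.
  by exists A; split => //; lia.
have [E|ne] := eqVneq #|A| m.+1; first by exists A.
have [B [HAB HB]] : exists B : {set 'I_n}, A \subset B /\ #|B| = m by apply: IH; lia.
case: (pickP (fun i => i \notin B)) => [i Hi|H].
  exists (i |: B); split; first by apply: subset_trans HAB (subsetUr _ _).
  by rewrite cardsU1 Hi HB.
have : B = setT by apply/setP => i; have := H i; rewrite inE; case: (i \in B).
by move=> EB; move: HB; rewrite EB cardsT card_ord; lia.
Qed.

Lemma build x k : (0 < k)%N -> (k.*2 <= n + 1)%N -> #|supp fs x| = k ->
  exists M, [/\ \rank M = k, PR_subspace f M & (x <= M)%MS].
Proof.
move=> k0 hk hs.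
have x0 : x != 0 by apply/eqP => E; move: hs; rewrite E supp0 cards0; lia.
have [B [HAB HB]] : exists B : {set 'I_n}, supp fs x \subset B /\ #|B| = (k.*2 - 1)%N.
  by apply: superset; lia.
pose Inv (M : 'M[R]_n) := forall y, (y <= M)%MS -> y != 0 -> (#|B :&: Zs y| < k)%N.
have main : forall j, (0 < j)%N -> (j <= k)%N -> exists M, [/\ \rank M = j, (x <= M)%MS & Inv M].
  elim => [//|j IH] _ Hj.
  case: j IH Hj => [|j] IH Hj.
    exists <<x>>%MS; split; first by rewrite genmxE rank_rV x0.
      by rewrite genmxE.
    move=> y; rewrite genmxE => /sub_rVP [t ->] y0.
    have t0 : t != 0 by apply: contraNneq y0 => ->; rewrite scale0r.
    have -> : B :&: Zs (t *: x) = B :\: supp fs x.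
      apply/setP => i; rewrite suppE !inE /L -scalemxAl mxE mulf_eq0 (negbTE t0) /=.
      by rewrite -/(L x) andbC negbK.
    rewrite cardsD (setIidPr HAB) HB hs; lia.
  have [M [HM xM IM]] := IH isT (ltnW Hj).
  pose Us := [seq (M + V Y)%MS | Y <- enum [set Y : {set 'I_n} | (k <= #|Y|)%N]].
  have [v Hv] : exists v : 'rV[R]_n, forall U, U \in Us -> ~~ (v <= U)%MS.
    apply: AVOID => U /mapP [Y]; rewrite mem_enum inE => HS ->.
    have := rank_adds_V M Y; have := card_le_n Y; rewrite HM; lia.
  have Hv' : forall Y : {set 'I_n}, (k <= #|Y|)%N -> ~~ (v <= M + V Y)%MS.
    by move=> Y HS; apply: Hv; apply: map_f; rewrite mem_enum inE.
  have vM : ~~ (v <= M)%MS.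
    apply: contra (Hv' setT _); last by rewrite cardsT card_ord; lia.
    by move=> h; apply: submx_trans h (addsmxSl _ _).
  exists (M + <<v>>)%MS; split.
  - have h1 : (M < M + <<v>>)%MS.
      rewrite ltmxE addsmxSl /=; apply: contra vM => h.
      by apply: submx_trans h; apply: submx_trans (addsmxSr _ _); rewrite genmxE.
    move: h1; rewrite ltmxErank => /andP [_ h1].
    have h2 : (\rank (M + <<v>>)%MS <= \rank M + \rank <<v>>%MS)%N by case: (mxrank_adds_leqif M <<v>>%MS).
    have h3 : (\rank <<v>>%MS <= 1)%N by rewrite genmxE rank_leq_row.
    lia.
  - by apply: submx_trans xM (addsmxSl _ _).
  - move=> y Hy y0; rewrite ltnNge; apply/negP => h.
    case: (DEC Hy (Z := B :&: Zs y)).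
    + by move=> i; rewrite !inE => /andP [_ /eqP].
    + by move=> yM; have := IM _ yM y0; lia.
    + by move/negP: (Hv' _ h).
have [M [HM xM IM]] := main k k0 (leqnn k).
exists M; split => //.
apply: PRc_PR => a b Ha Hb Hab.
have [->|a0] := eqVneq a 0; first by left.
have [->|b0] := eqVneq b 0; first by right.
have := IM _ Ha a0; have := IM _ Hb b0.
have HU : B \subset (B :&: Zs a) :|: (B :&: Zs b).
  apply/subsetP => i Hi; rewrite !inE Hi /=; by case: (Hab i) => ->; rewrite eqxx ?orbT.
have := subset_leq_card HU; have := cardsU (B :&: Zs a) (B :&: Zs b); rewrite HB; lia.
Qed.
End Main.

Unset Implicit Arguments.

Theorem theorem4p9 (R : realType) (n : nat) (f fs : 'M[R]_n)
  (hf : row_free f) (hfs : is_dual_basis f fs) :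
  (* (i) *)
  (forall (k : nat) (M : 'M[R]_n), (0 < k)%N -> \rank M = k -> PR_subspace f M ->
     (forall x : 'rV[R]_n, (x <= M)%MS -> x != 0 -> (k <= #|supp fs x|)%N) /\
     ((exists2 x : 'rV[R]_n, (x <= M)%MS & #|supp fs x| = k) -> maximal_PR f M)) /\
  (* (ii) *)
  (forall (k : nat), (0 < k)%N -> (k <= (n + 1)./2)%N ->
     forall x : 'rV[R]_n, #|supp fs x| = k ->
     exists M : 'M[R]_n, [/\ \rank M = k, maximal_PR f M & (x <= M)%MS]) /\
  (* (iii) *)
  (forall (k : nat) (M : 'M[R]_n), (0 < k)%N -> (k < (n + 1)./2)%N ->
     \rank M = k -> PR_subspace f M ->
     (maximal_PR f M <-> exists2 x : 'rV[R]_n, (x <= M)%MS & #|supp fs x| = k)).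
Proof.
have P1 : forall (k : nat) (M : 'M[R]_n), (0 < k)%N -> \rank M = k -> PR_subspace f M ->
     (forall x : 'rV[R]_n, (x <= M)%MS -> x != 0 -> (k <= #|supp fs x|)%N) /\
     ((exists2 x : 'rV[R]_n, (x <= M)%MS & #|supp fs x| = k) -> maximal_PR f M).
  move=> k M k0 HM HP; split.
    by move=> x Hx x0; rewrite -HM; exact: (@part1 R n f fs hf hfs M x HP Hx x0).
  case=> x Hx Hs; apply: (@part2 R n f fs hf hfs M x HP); rewrite ?HM //.
split => //; split.
  move=> k k0 hk x hs.
  have hk2 : (k.*2 <= n + 1)%N.
    have := odd_double_half (n+1); rewrite -leq_double in hk; lia.
  have [M [HM HP xM]] := build hf hfs k0 hk2 hs.
  exists M; split => //.
  by apply: (proj2 (P1 k M k0 HM HP)); exists x.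
move=> k M k0 hk HM HP; split; last exact: (proj2 (P1 k M k0 HM HP)).
case=> _ Hmax.
case: (pselect (exists2 x : 'rV[R]_n, (x <= M)%MS & #|supp fs x| = k)) => // Hno.
exfalso.
have hk2 : (k.*2 < n)%N.
  have := odd_double_half (n+1); rewrite -leq_double in hk; lia.
have Hs : forall y, (y <= M)%MS -> y != 0 -> (k < #|supp fs y|)%N.
  move=> y Hy y0; have := (proj1 (P1 k M k0 HM HP)) y Hy y0.
  rewrite leq_eqVlt => /orP [/eqP E|//].
  by exfalso; apply: Hno; exists y.
have [M' [HP' Hlt]] := extend hf hfs HP HM hk2 Hs.
exact: Hmax M' HP' Hlt.
Qed.
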